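(* Let $(S,\le)$ be a dcwo, $g:S\rightharpoonup S$ a partial monotonic map, and $s\in S$. Let $G$ be the family of all elements $g^n(s)$, for those $n\in\mathbb N$ such that $g^n(s)$ is defined. Then there are finitely many directed subfamilies $G_0,G_1,\dots,G_{m-1}$ of $G$ such that: (1) $cl(G)=\bigcup_{j=0}^{m-1}cl(G_j)=\downarrow\{\bigvee G_0,\bigvee G_1,\dots,\bigvee G_{m-1}\}$; (2) each $G_j$ is either a one-element set $\{g^{p_j}(s)\}$ with $p_j\in\mathbb N$, or a chain of the form $\{g^{p_j+\ell q_j}(s)\mid \ell\in\mathbb N\}$ where $p_j\in\mathbb N$, $q_j\in\mathbb N\setminus\{0\}$ and $g^{p_j}(s)<g^{p_j+q_j}(s)$; (3) for every $j$ with $0\le j<m$, $s\not< g^{p_j}(s)$.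
   Context: A dcwo is a partial order which is well (well-founded, no infinite antichain) and a dcpo (every directed subset $D$ has a least upper bound $\bigvee D$). A partial monotonic map has an upward-closed domain and is monotone on its domain. $cl$ denotes closure in the Scott topology (open sets: upward-closed sets $U$ meeting every directed set whose lub lies in $U$). *)

(* Defs.v *)
From Stdlib Require Import Arith.

Section Order.
Context {S : Type} (le : S -> S -> Prop).

Definition is_partial_order : Prop :=
  (forall x, le x x) /\
  (forall x y, le x y -> le y x -> x = y) /\
  (forall x y z, le x y -> le y z -> le x z).

Definition lt (x y : S) : Prop := le x y /\ x <> y.

Definition is_well_founded_order : Prop := well_founded lt.

Definition no_infinite_antichain : Prop :=
  ~ exists f : nat -> S,
      forall i j, i <> j -> ~ le (f i) (f j).

Definition directed (D : S -> Prop) : Prop :=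
  (exists x, D x) /\
  (forall x y, D x -> D y -> exists z, D z /\ le x z /\ le y z).

Definition is_lub (D : S -> Prop) (u : S) : Prop :=
  (forall x, D x -> le x u) /\
  (forall v, (forall x, D x -> le x v) -> le u v).

Definition is_dcpo : Prop :=
  forall D, directed D -> exists u, is_lub D u.

Definition is_dcwo : Prop :=
  is_partial_order /\ is_well_founded_order /\ no_infinite_antichain /\ is_dcpo.

Definition partial_monotonic (dom : S -> Prop) (g : S -> S) : Prop :=
  (forall x y, dom x -> le x y -> dom y) /\
  (forall x y, dom x -> le x y -> le (g x) (g y)).

Definition upward_closed (U : S -> Prop) : Prop :=
  forall x y, U x -> le x y -> U y.

Definition scott_open (U : S -> Prop) : Prop :=
  upward_closed U /\
  (forall D u, directed D -> is_lub D u -> U u -> exists x, D x /\ U x).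

Definition scott_closed (C : S -> Prop) : Prop :=
  scott_open (fun x => ~ C x).

Definition cl (A : S -> Prop) : S -> Prop :=
  fun x => forall C, scott_closed C -> (forall y, A y -> C y) -> C x.

End Order.

Definition iterate {S : Type} (g : S -> S) (n : nat) (s : S) : S :=
  Nat.iter n g s.

Fixpoint iter_defined {S : Type} (dom : S -> Prop) (g : S -> S) (s : S)
  (n : nat) : Prop :=
  match n with
  | 0 => True
  | S k => iter_defined dom g s k /\ dom (iterate g k s)
  end.

Definition orbit {S : Type} (dom : S -> Prop) (g : S -> S) (s : S) : S -> Prop :=
  fun x => exists n, iter_defined dom g s n /\ x = iterate g n s.

(* Main.v *)
Require Import Defs.
From Stdlib Require Import Arith Lia Classical ClassicalEpsilon.

Lemma iter_S {T} (g : T -> T) n s : iterate g (S n) s = g (iterate g n s).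
Proof. reflexivity. Qed.

Lemma iter_add {T} (g:T->T) n m s :
  iterate g (n + m) s = iterate g n (iterate g m s).
Proof. unfold iterate. apply Nat.iter_add. Qed.

Lemma iter_def_iff {T} (dom:T->Prop) g s n :
  iter_defined dom g s n <-> forall k, k < n -> dom (iterate g k s).
Proof.
  induction n as [|n IH]; simpl.
  - split; [intros _ k Hk; lia | auto].
  - split.
    + intros [H1 H2] k Hk. destruct (Nat.eq_dec k n) as [->|Hne]; auto.
      apply IH; auto; lia.
    + intros H. split; [apply IH; intros; apply H; lia | apply H; lia].
Qed.

Lemma iter_def_down {T} (dom:T->Prop) g s n k :
  iter_defined dom g s n -> k <= n -> iter_defined dom g s k.
Proof.
  rewrite !iter_def_iff. intros H Hk j Hj. apply H. lia.
Qed.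

Lemma no_desc {T} (le:T->T->Prop) (Hwf : well_founded (lt le)) (f : nat -> T) :
  ~ (forall m, lt le (f (S m)) (f m)).
Proof.
  intros Hf.
  assert (H : forall x, Acc (lt le) x -> forall m, f m <> x).
  { intros x Hacc. induction Hacc as [x _ IH]. intros m Hm. subst x.
    apply (IH (f (S m)) (Hf m) (S m)). reflexivity. }
  apply (H (f 0) (Hwf _) 0). reflexivity.
Qed.

Lemma shift {T} (le:T->T->Prop) dom g s
  (Hpm : partial_monotonic le dom g) (Hdom : forall k, dom (iterate g k s)) i j :
  le (iterate g i s) (iterate g j s) ->
  forall t, le (iterate g (i+t) s) (iterate g (j+t) s).
Proof.
  intros H t. induction t as [|t IH].
  - rewrite !Nat.add_0_r; auto.
  - rewrite !Nat.add_succ_r, !iter_S. apply (proj2 Hpm); auto.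
Qed.

Lemma cl_lub {T} (le:T->T->Prop) (Hpo: is_partial_order le) D b :
  directed le D -> is_lub le D b -> forall x, cl le D x <-> le x b.
Proof.
  destruct Hpo as (Hr & Ha & Ht). intros Hdir [Hub Hl] x. split.
  - intros Hc. apply (Hc (fun y => le y b)); auto.
    split.
    + intros y z Hy Hyz Hzb. apply Hy. eapply Ht; eauto.
    + intros D' u _ [Hub' Hl'] Hu. apply NNPP. intros Hn. apply Hu. apply Hl'.
      intros y Hy. apply NNPP. intros Hy'. apply Hn. exists y. auto.
  - intros Hxb C [Hup Hop] HDC. apply NNPP. intros HCx.
    assert (HCb : ~ C b) by (apply (Hup x b); auto).
    destruct (Hop D b Hdir (conj Hub Hl) HCb) as [y [Hy HCy]]. auto.
Qed.

Lemma upper_finite {T} (le:T->T->Prop) (Hpo: is_partial_order le) D (b: nat->T) :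
  directed le D -> forall n, (forall j, j < n -> exists x, D x /\ ~ le x (b j)) ->
  exists z, D z /\ forall j, j < n -> ~ le z (b j).
Proof.
  destruct Hpo as (Hr & Ha & Ht). intros [[x0 Hx0] Hdir] n.
  induction n as [|n IH]; intros H.
  - exists x0. split; auto. intros; lia.
  - destruct IH as [z [Hz Hzn]]. { intros j Hj. apply H. lia. }
    destruct (H n ltac:(lia)) as [x [Hx Hxn]].
    destruct (Hdir z x Hz Hx) as [w [Hw [Hzw Hxw]]].
    exists w. split; auto. intros j Hj Hwb.
    destruct (Nat.eq_dec j n) as [->|Hne].
    + apply Hxn. eauto.
    + apply (Hzn j ltac:(lia)). eauto.
Qed.

Lemma E_closed {T} (le:T->T->Prop) (Hpo: is_partial_order le) m (b : nat -> T) :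
  scott_closed le (fun x => exists j, j < m /\ le x (b j)).
Proof.
  pose proof Hpo as (Hr & Ha & Ht).
  split.
  - intros x y Hx Hxy [j [Hj Hyb]]. apply Hx. exists j. split; eauto.
  - intros D u Hdir [Hub Hl] Hu. apply NNPP. intros Hn.
    assert (HE : forall x, D x -> exists j, j < m /\ le x (b j)).
    { intros x Hx. apply NNPP. intros Hx'. apply Hn. exists x. auto. }
    destruct (classic (exists j, j < m /\ forall x, D x -> le x (b j)))
      as [[j [Hj Hall]]|Hno].
    + apply Hu. exists j. split; auto.
    + destruct (upper_finite le Hpo D b Hdir m) as [z [Hz Hzn]].
      * intros j Hj. apply NNPP. intros Hj'. apply Hno. exists j. split; auto.
        intros x Hx. apply NNPP. intros Hx'. apply Hj'. exists x. auto.
      * destruct (HE z Hz) as [j [Hj Hzb]]. apply (Hzn j Hj Hzb).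
Qed.

Lemma closure_generic {T} (le:T->T->Prop) (Hpo: is_partial_order le)
  (O : T -> Prop) m (Gs : nat -> T -> Prop) b :
  (forall j, j < m -> directed le (Gs j) /\ is_lub le (Gs j) (b j) /\
                      (forall x, Gs j x -> O x)) ->
  (forall x, O x -> exists j, j < m /\ Gs j x) ->
  forall x, (cl le O x <-> exists j, j < m /\ cl le (Gs j) x) /\
            (cl le O x <-> exists j, j < m /\ le x (b j)).
Proof.
  intros HG Hcov.
  assert (key : forall x, cl le O x <-> exists j, j < m /\ le x (b j)).
  { intros x. split.
    - intros Hc. apply (Hc _ (E_closed le Hpo m b)).
      intros y Hy. destruct (Hcov y Hy) as [j [Hj Hgy]]. exists j. split; auto.
      destruct (HG j Hj) as [_ [[Hub _] _]]. auto.
    - intros [j [Hj Hxb]]. destruct (HG j Hj) as [Hdir [Hlub Hsub]].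
      apply (cl_lub le Hpo _ _ Hdir Hlub) in Hxb.
      intros C HC HOC. apply Hxb; auto. }
  intros x. split; auto. rewrite key. split.
  - intros [j [Hj Hxb]]. exists j. split; auto.
    destruct (HG j Hj) as [Hdir [Hlub _]]. exact (proj2 (cl_lub le Hpo _ _ Hdir Hlub x) Hxb).
  - intros [j [Hj Hxb]]. exists j. split; auto.
    destruct (HG j Hj) as [Hdir [Hlub _]]. exact (proj1 (cl_lub le Hpo _ _ Hdir Hlub x) Hxb).
Qed.


Definition Concl {T : Type} (le : T -> T -> Prop) (dom : T -> Prop)
  (g : T -> T) (s : T) : Prop :=
  exists (m : nat) (Gs : nat -> T -> Prop) (p q : nat -> nat) (b : nat -> T),
    (forall j, j < m ->
       (forall x, Gs j x -> orbit dom g s x) /\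
       directed le (Gs j) /\
       is_lub le (Gs j) (b j) /\
       ((iter_defined dom g s (p j) /\
         (forall x, Gs j x <-> x = iterate g (p j) s))
        \/
        (0 < q j /\
         (forall l, iter_defined dom g s (p j + l * q j)) /\
         (forall x, Gs j x <-> exists l, x = iterate g (p j + l * q j) s) /\
         lt le (iterate g (p j) s) (iterate g (p j + q j) s))) /\
       ~ lt le s (iterate g (p j) s)) /\
    (forall x,
       (cl le (orbit dom g s) x <-> exists j, j < m /\ cl le (Gs j) x) /\
       (cl le (orbit dom g s) x <-> exists j, j < m /\ le x (b j))).

Lemma main_spec {T} (le : T->T->Prop) dom g s (Hd : is_dcwo le) (m q : nat)
  (C : nat -> Prop)
  (H1 : forall j, j < m -> iter_defined dom g s j /\ ~ lt le s (iterate g j s))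
  (H2 : forall j, j < m -> C j -> 0 < q /\ (forall l, iter_defined dom g s (j + l*q)) /\
          lt le (iterate g j s) (iterate g (j+q) s) /\
          (forall l l', l <= l' -> le (iterate g (j + l*q) s) (iterate g (j + l'*q) s)))
  (H3 : forall n, iter_defined dom g s n -> exists j, j < m /\
          ((C j /\ exists l, iterate g n s = iterate g (j + l*q) s) \/
           (~ C j /\ iterate g n s = iterate g j s))) :
  Concl le dom g s.
Proof.
  destruct Hd as (Hpo & Hwf & Hac & Hdcpo).
  pose proof Hpo as (Hr & Ha & Ht).
  set (Gs := fun j x => (C j /\ exists l, x = iterate g (j + l*q) s) \/
                        (~ C j /\ x = iterate g j s)).
  assert (Hdir : forall j, j < m -> directed le (Gs j)).
  { intros j Hj. destruct (classic (C j)) as [Hc|Hc].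
    - destruct (H2 j Hj Hc) as (Hq & Hdef & Hlt & Hmon). split.
      + exists (iterate g j s). left. split; auto. exists 0.
        rewrite Nat.mul_0_l, Nat.add_0_r. reflexivity.
      + intros x y [[_ [l1 ->]]|[Hn _]] [[_ [l2 ->]]|[Hn' _]]; try contradiction.
        exists (iterate g (j + Nat.max l1 l2 * q) s). split.
        * left. split; auto. exists (Nat.max l1 l2). reflexivity.
        * split; apply Hmon; lia.
    - split.
      + exists (iterate g j s). right. auto.
      + intros x y [[Hn _]|[_ ->]] [[Hn' _]|[_ ->]]; try contradiction.
        exists (iterate g j s). split; [right; auto| auto]. }
  assert (Hb : forall j, exists u, j < m -> is_lub le (Gs j) u).
  { intros j. destruct (lt_dec j m) as [Hj|Hj].
    - destruct (Hdcpo _ (Hdir j Hj)) as [u Hu]. exists u. auto.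
    - exists s. intros; contradiction. }
  set (b := fun j => proj1_sig (constructive_indefinite_description _ (Hb j))).
  assert (Hbl : forall j, j < m -> is_lub le (Gs j) (b j)).
  { intros j Hj. unfold b. destruct (constructive_indefinite_description _ (Hb j)) as [u Hu].
    simpl. auto. }
  assert (Hsub : forall j, j < m -> forall x, Gs j x -> orbit dom g s x).
  { intros j Hj x [[Hc [l ->]]|[_ ->]].
    - destruct (H2 j Hj Hc) as (_ & Hdef & _). exists (j + l*q). auto.
    - exists j. split; auto. apply (H1 j Hj). }
  exists m, Gs, (fun j => j), (fun _ => q), b. split.
  - intros j Hj. split; [apply Hsub; auto|]. split; [auto|]. split; [auto|].
    split; [| apply (H1 j Hj)].
    destruct (classic (C j)) as [Hc|Hc].
    + destruct (H2 j Hj Hc) as (Hq & Hdef & Hlt & Hmon). right.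
      split; auto. split; auto. split; auto.
      intros x. split.
      * intros [[_ Hl]|[Hn _]]; [auto|contradiction].
      * intros Hl. left. auto.
    + left. split; [apply (H1 j Hj)|].
      intros x. split.
      * intros [[Hn _]|[_ Hx]]; [contradiction|auto].
      * intros Hx. right. auto.
  - apply closure_generic; auto.
    { intros j Hj. split; auto. split; auto. apply Hsub; auto. }
    intros x [n [Hn ->]]. destruct (H3 n Hn) as [j [Hj Hc]]. exists j. split; [auto|].
    unfold Gs. destruct Hc as [[Hc [l Hl]]|[Hc Hl]]; [left|right]; split; eauto.
Qed.

Lemma periodic_case {T} (le : T->T->Prop) dom g s (Hd : is_dcwo le)
  (Hpm : partial_monotonic le dom g)
  (Hall : forall k, dom (iterate g k s)) i q (Hq : 0 < q)
  (Hle : le (iterate g i s) (iterate g (i+q) s))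
  (Hns : forall p, p < i + q -> ~ lt le s (iterate g p s)) :
  Concl le dom g s.
Proof.
  pose proof Hd as (Hpo & _).
  pose proof Hpo as (Hr & Ha & Ht).
  assert (Hdef : forall n, iter_defined dom g s n).
  { intros n. apply iter_def_iff. intros; auto. }
  assert (Hmon1 : forall k, i <= k -> le (iterate g k s) (iterate g (k+q) s)).
  { intros k Hk. pose proof (shift le dom g s Hpm Hall i (i+q) Hle (k - i)) as H.
    replace (i + (k - i)) with k in H by lia.
    replace (i + q + (k - i)) with (k + q) in H by lia. auto. }
  assert (Hmon : forall j, i <= j -> forall l d,
            le (iterate g (j + l*q) s) (iterate g (j + (l + d)*q) s)).
  { intros j Hj l d. induction d as [|d IH].
    - rewrite Nat.add_0_r. auto.
    - eapply Ht; [apply IH|].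
      replace (j + (l + S d) * q) with ((j + (l + d) * q) + q) by lia.
      apply Hmon1. lia. }
  apply (main_spec le dom g s Hd (i+q) q
           (fun j => i <= j /\ iterate g j s <> iterate g (j+q) s)).
  - intros j Hj. split; auto.
  - intros j Hj [Hij Hne]. split; auto. split; auto. split.
    + split; [apply Hmon1; auto | auto].
    + intros l l' Hll'. replace l' with (l + (l' - l)) by lia. apply Hmon. auto.
  - intros n _. destruct (lt_dec n i) as [Hn|Hn].
    + exists n. split; [lia|]. right. split; auto. intros [H _]. lia.
    + assert (Hdm := Nat.div_mod (n - i) q ltac:(lia)).
      assert (Hmb := Nat.mod_upper_bound (n - i) q ltac:(lia)).
      set (l := (n - i) / q) in *. set (r := (n - i) mod q) in *.
      assert (Hn' : n = (i + r) + l * q) by (rewrite (Nat.mul_comm q l) in Hdm; lia).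
      exists (i + r). split; [lia|].
      destruct (classic (iterate g (i + r) s <> iterate g (i + r + q) s)) as [Hc|Hc].
      * left. split; [split; [lia|auto]|]. exists l. rewrite Hn'. reflexivity.
      * right. split; [intros [_ H]; auto|].
        apply NNPP in Hc.
        assert (Hper : forall t, iterate g (i + r + q + t) s = iterate g (i + r + t) s).
        { intros t. rewrite (Nat.add_comm _ t), (Nat.add_comm _ t), (iter_add g t (i+r+q) s), (iter_add g t (i+r) s), <- Hc.
          reflexivity. }
        assert (Hl : forall l0, iterate g (i + r + l0 * q) s = iterate g (i + r) s).
        { induction l0 as [|l0 IH].
          - rewrite Nat.mul_0_l, Nat.add_0_r. reflexivity.
          - rewrite <- IH, <- (Hper (l0 * q)). f_equal. lia. }
        rewrite Hn'. apply Hl.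
Qed.

Lemma min_ex (P : nat -> Prop) : (exists n, P n) ->
  exists n, P n /\ forall k, k < n -> ~ P k.
Proof.
  intros [n Hn]. induction n as [n IH] using lt_wf_ind.
  destruct (classic (exists k, k < n /\ P k)) as [[k [Hk Pk]]|Hno].
  - apply (IH k Hk Pk).
  - exists n. split; auto. intros k Hk Pk. apply Hno. eauto.
Qed.

Lemma find_N {T} (dom : T -> Prop) g s : ~ (forall n, iter_defined dom g s n) ->
  exists N, iter_defined dom g s N /\ ~ iter_defined dom g s (S N).
Proof.
  intros H. apply not_all_ex_not in H. destruct H as [n Hn].
  induction n as [|n IH].
  - exfalso. apply Hn. exact I.
  - destruct (classic (iter_defined dom g s n)) as [Hd|Hd]; eauto.
Qed.

Lemma main_thm {T} (le : T->T->Prop) dom g s :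
  is_dcwo le -> partial_monotonic le dom g -> Concl le dom g s.
Proof.
  intros Hd Hpm. pose proof Hd as (Hpo & Hwf & Hac & Hdcpo).
  pose proof Hpo as (Hr & Ha & Ht).
  destruct (classic (exists p, iter_defined dom g s p /\ lt le s (iterate g p s)))
    as [HA|HnA].
  - destruct (min_ex _ HA) as [p [[Hp Hlt] Hmin]].
    assert (Hp0 : 0 < p).
    { destruct p; [|lia]. destruct Hlt as [_ Hne]. exfalso. apply Hne. reflexivity. }
    assert (Hk : forall n k, k < n -> dom (iterate g k s) /\
                  le (iterate g k s) (iterate g (k + p) s)).
    { induction n as [|n IH]; intros k Hk; [lia|].
      destruct (Nat.eq_dec k n) as [->|Hne]; [|apply IH; lia].
      split.
      - destruct (lt_dec n p) as [Hnp|Hnp].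
        + apply (proj1 (iter_def_iff dom g s p) Hp). auto.
        + destruct (IH (n - p) ltac:(lia)) as [Hd1 Hle1].
          replace (n - p + p) with n in Hle1 by lia.
          apply (proj1 Hpm _ _ Hd1 Hle1).
      - destruct n as [|n'].
        + simpl. apply Hlt.
        + destruct (IH n' ltac:(lia)) as [Hd1 Hle1].
          simpl. apply (proj2 Hpm); auto. }
    assert (Hall : forall k, dom (iterate g k s)) by (intros k; apply (Hk (S k) k); lia).
    apply (periodic_case le dom g s Hd Hpm Hall 0 p Hp0).
    + simpl. apply Hlt.
    + intros k Hkp Hl. apply (Hmin k ltac:(lia)). split; auto.
      apply iter_def_iff. intros; auto.
  - destruct (classic (forall n, iter_defined dom g s n)) as [Hdef|Hnall].
    + assert (Hall : forall k, dom (iterate g k s)).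
      { intros k. apply (proj1 (iter_def_iff dom g s (S k)) (Hdef (S k))). lia. }
      assert (Hns : forall p, ~ lt le s (iterate g p s)).
      { intros p Hl. apply HnA. exists p. auto. }
      destruct (classic (exists i j, i < j /\ le (iterate g i s) (iterate g j s)))
        as [[i [j [Hij Hle]]]|Hbad].
      * apply (periodic_case le dom g s Hd Hpm Hall i (j - i) ltac:(lia)).
        -- replace (i + (j - i)) with j by lia. auto.
        -- intros; auto.
      * exfalso.
        destruct (classic (exists i j, i < j /\ le (iterate g j s) (iterate g i s)))
          as [[i [j [Hij Hle]]]|Hnd].
        -- pose proof (shift le dom g s Hpm Hall j i Hle) as Hsh.
           apply (no_desc le Hwf (fun m => iterate g (i + m * (j - i)) s)).
           intros m. split.
           ++ pose proof (Hsh (m * (j - i))) as H.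
              replace (j + m * (j - i)) with (i + S m * (j - i)) in H by lia. auto.
           ++ intros Heq. apply Hbad. exists (i + m * (j - i)), (i + S m * (j - i)).
              split; [lia|]. rewrite Heq. auto.
        -- apply Hac. exists (fun n => iterate g n s). intros i j Hij Hle.
           destruct (lt_dec i j) as [Hl|Hl].
           ++ apply Hbad. eauto.
           ++ apply Hnd. exists j, i. split; [lia|auto].
    + destruct (find_N dom g s Hnall) as [N [HN HSN]].
      apply (main_spec le dom g s Hd (S N) 0 (fun _ => False)).
      * intros j Hj. split.
        -- apply (iter_def_down dom g s N); auto; lia.
        -- intros Hl. apply HnA. exists j. split; auto.
           apply (iter_def_down dom g s N); auto; lia.
      * intros j _ [].
      * intros n Hn. exists n. split.
        -- destruct (le_lt_dec n N) as [H|H]; [lia|].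
           exfalso. apply HSN. apply (iter_def_down dom g s n); auto.
        -- right. auto.
Qed.

Theorem lemma5p19 (S : Type) (le : S -> S -> Prop) (dom : S -> Prop)
  (g : S -> S) (s : S) :
  is_dcwo le ->
  partial_monotonic le dom g ->
  exists (m : nat) (Gs : nat -> S -> Prop) (p q : nat -> nat) (b : nat -> S),
    (forall j, j < m ->
       (forall x, Gs j x -> orbit dom g s x) /\
       directed le (Gs j) /\
       is_lub le (Gs j) (b j) /\
       ((iter_defined dom g s (p j) /\
         (forall x, Gs j x <-> x = iterate g (p j) s))
        \/
        (0 < q j /\
         (forall l, iter_defined dom g s (p j + l * q j)) /\
         (forall x, Gs j x <-> exists l, x = iterate g (p j + l * q j) s) /\
         lt le (iterate g (p j) s) (iterate g (p j + q j) s))) /\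
       ~ lt le s (iterate g (p j) s)) /\
    (forall x,
       (cl le (orbit dom g s) x <-> exists j, j < m /\ cl le (Gs j) x) /\
       (cl le (orbit dom g s) x <-> exists j, j < m /\ le x (b j))).
Proof.
  intros Hd Hpm. exact (main_thm le dom g s Hd Hpm).
Qed.
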